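(* Let $H$ be an almost-breakable semigroup and let $x,y\in H$. Then: (i) the principal two-sided ideals $HzH$ ($z\in H$) form a chain under set inclusion; (ii) if $HxH\subsetneq HyH$, then $xyx=x$ and $xy\simeq_H yx\simeq_H x$; (iii) if $x\simeq_H y$, then $\{xy,yx\}=\{x,y\}$; (iv) there are no elements $x,y,z\in H$ with $HxH\subsetneq HyH$ and $HxH\subsetneq HzH$ such that $xy\neq x$ and $zx\neq x$; (v) if $HxH\subsetneq HyH$, $yx\neq x$, and $x'\in H$ satisfies $x\simeq_H x'$, then $x'y=x'$.
   Context: A semigroup $H$ is almost-breakable if for all $x,y\in H$, $xy\in\{x,y\}$ or $yx\in\{x,y\}$. For $z\in H$, $HzH=\{uzv:u,v\in H\}$, and $x\simeq_H y$ means $HxH=HyH$. *)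

(* Defs.v *)
Definition associative_op {T : Type} (op : T -> T -> T) : Prop :=
  forall a b c : T, op a (op b c) = op (op a b) c.

Definition almost_breakable {T : Type} (op : T -> T -> T) : Prop :=
  forall x y : T,
    (op x y = x \/ op x y = y) \/ (op y x = x \/ op y x = y).

Definition ideal2 {T : Type} (op : T -> T -> T) (z : T) : T -> Prop :=
  fun w => exists u v : T, w = op (op u z) v.

Definition subset {T : Type} (A B : T -> Prop) : Prop :=
  forall w, A w -> B w.

Definition set_eq {T : Type} (A B : T -> Prop) : Prop :=
  forall w, A w <-> B w.

Definition ssubset {T : Type} (A B : T -> Prop) : Prop :=
  subset A B /\ ~ set_eq A B.

Definition H_equiv {T : Type} (op : T -> T -> T) (x y : T) : Prop :=
  set_eq (ideal2 op x) (ideal2 op y).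

Definition pair_eq {T : Type} (a b c d : T) : Prop :=
  (a = c \/ a = d) /\ (b = c \/ b = d) /\ (c = a \/ c = b) /\ (d = a \/ d = b).

(* Main.v *)
Require Import Defs.
From Stdlib Require Import Setoid.

Section S.
Context (T : Type) (op : T -> T -> T) (Hassoc : associative_op op)
  (Hab : almost_breakable op).

Lemma idem x : op x x = x.
Proof. destruct (Hab x x) as [[H|H]|[H|H]]; exact H. Qed.

Lemma idemL p x : op (op p x) x = op p x.
Proof. rewrite <- Hassoc, idem; reflexivity. Qed.

Lemma in_self x : ideal2 op x x.
Proof. exists x, x. rewrite !idem; reflexivity. Qed.

Lemma mem_sub x y : ideal2 op y x -> subset (ideal2 op x) (ideal2 op y).
Proof.
  intros [u [v Hx]] w [a [b Hw]]. subst.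
  exists (op a u), (op v b). rewrite !Hassoc. reflexivity.
Qed.

Lemma equiv_of_mem a b : ideal2 op b a -> ideal2 op a b -> H_equiv op a b.
Proof.
  intros H1 H2 w; split; [apply mem_sub; exact H1| apply mem_sub; exact H2].
Qed.

Lemma pyq p y q : y = op (op p y) q -> op p y = y /\ op y q = y.
Proof.
  intros H; split.
  - assert (E : op p y = op p (op (op p y) q)) by (rewrite <- H; reflexivity).
    rewrite E, !Hassoc, idem. symmetry; exact H.
  - assert (E : op y q = op (op (op p y) q) q) by (rewrite <- H; reflexivity).
    rewrite E, idemL. symmetry; exact H.
Qed.

Lemma ss_case x y : ssubset (ideal2 op x) (ideal2 op y) -> op x y = x \/ op y x = x.
Proof.
  intros [Hs Hne].
  assert (Hy : ~ ideal2 op x y).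
  { intro Hy. apply Hne. intro w; split; [apply Hs | apply mem_sub; exact Hy]. }
  destruct (Hab x y) as [[H|H]|[H|H]]; auto.
  - exfalso; apply Hy. exists x, y. rewrite idem. symmetry; exact H.
  - exfalso; apply Hy. exists y, x. rewrite <- Hassoc, idem. symmetry; exact H.
Qed.

Lemma L1 a b : op a b = a -> ideal2 op a b -> op b a = b.
Proof.
  intros Hab' [s [t Hb]].
  assert (Hb' : b = op (op (op s a) b) t).
  { rewrite <- (Hassoc s a b), Hab'. exact Hb. }
  destruct (pyq _ _ _ Hb') as [E1 _].
  assert (Haba : op (op a b) a = a) by (rewrite Hab', idem; reflexivity).
  assert (Ew : op b a = op s a).
  { rewrite <- E1. rewrite <- !Hassoc. rewrite (Hassoc a b a), Haba. reflexivity. }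
  assert (Ewy : op (op b a) b = op b a).
  { rewrite <- Hassoc, Hab'. reflexivity. }
  rewrite <- Ewy. rewrite Ew. exact E1.
Qed.

Lemma L2 a b : op b a = a -> ideal2 op a b -> op a b = b.
Proof.
  intros Hba [s [t Hb]].
  assert (Hb' : b = op (op s b) (op a t)).
  { rewrite (Hassoc (op s b) a t), <- (Hassoc s b a), Hba. exact Hb. }
  destruct (pyq _ _ _ Hb') as [_ E2].
  assert (Haba : op (op a b) a = a) by (rewrite <- Hassoc, Hba, idem; reflexivity).
  assert (Eab : op a b = op a t).
  { rewrite <- E2 at 1. rewrite Hassoc, Hassoc, Haba. reflexivity. }
  assert (Eb : op b (op a b) = op a b).
  { rewrite Hassoc, Hba. reflexivity. }
  transitivity (op b (op a b)); [symmetry; exact Eb|]. rewrite Eab. exact E2.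
Qed.

End S.

Theorem lemma4p1 (T : Type) (op : T -> T -> T)
  (Hassoc : associative_op op) (Hab : almost_breakable op) (x y : T) :
  (* (i) principal two-sided ideals form a chain *)
  (forall z w : T, subset (ideal2 op z) (ideal2 op w) \/ subset (ideal2 op w) (ideal2 op z))
  (* (ii) *)
  /\ (ssubset (ideal2 op x) (ideal2 op y) ->
        op (op x y) x = x /\ H_equiv op (op x y) (op y x) /\ H_equiv op (op y x) x)
  (* (iii) *)
  /\ (H_equiv op x y -> pair_eq (op x y) (op y x) x y)
  (* (iv) *)
  /\ (~ exists a b c : T,
          ssubset (ideal2 op a) (ideal2 op b) /\ ssubset (ideal2 op a) (ideal2 op c) /\
          op a b <> a /\ op c a <> a)
  (* (v) *)
  /\ (forall x' : T, ssubset (ideal2 op x) (ideal2 op y) -> op y x <> x ->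
        H_equiv op x x' -> op x' y = x').
Proof.
  pose proof (idem T op Hab) as Id.
  pose proof (idemL T op Hassoc Hab) as IdL.
  assert (P3 : forall a b, H_equiv op a b -> pair_eq (op a b) (op b a) a b).
  { intros a b He.
    assert (Ha : ideal2 op b a) by (apply He; apply in_self; exact Hab).
    assert (Hb : ideal2 op a b) by (apply He; apply in_self; exact Hab).
    unfold pair_eq.
    destruct (Hab a b) as [[H|H]|[H|H]].
    - pose proof (L1 T op Hassoc Hab a b H Hb). rewrite H, H0; tauto.
    - pose proof (L2 T op Hassoc Hab b a H Ha). rewrite H, H0; tauto.
    - pose proof (L2 T op Hassoc Hab a b H Hb). rewrite H, H0; tauto.
    - pose proof (L1 T op Hassoc Hab b a H Ha). rewrite H, H0; tauto. }
  assert (Hxyx : forall a b, op a b = a \/ op b a = a -> op (op a b) a = a).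
  { intros a b [H|H]. rewrite H; apply Id. rewrite <- Hassoc, H; apply Id. }
  split; [|split; [|split; [|split]]].
  - intros z w. destruct (Hab z w) as [[H|H]|[H|H]].
    + left. apply mem_sub; [exact Hassoc|]. exists z, w. rewrite IdL. symmetry; exact H.
    + right. apply mem_sub; [exact Hassoc|]. exists z, w. rewrite Id. symmetry; exact H.
    + left. apply mem_sub; [exact Hassoc|]. exists w, z. rewrite Id. symmetry; exact H.
    + right. apply mem_sub; [exact Hassoc|]. exists w, z. rewrite IdL. symmetry; exact H.
  - intros Hs. pose proof (ss_case T op Hassoc Hab x y Hs) as C.
    pose proof (Hxyx x y C) as E.
    assert (E1 : H_equiv op (op x y) x).
    { apply equiv_of_mem; [exact Hassoc| |].
      - exists x, y. rewrite Id. reflexivity.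
      - exists x, x. rewrite Hassoc, Id, E. reflexivity. }
    assert (E2 : H_equiv op (op y x) x).
    { apply equiv_of_mem; [exact Hassoc| |].
      - exists y, x. rewrite IdL. reflexivity.
      - exists x, x. rewrite Hassoc, E, Id. reflexivity. }
    split; [exact E|split; [|exact E2]].
    intro w. rewrite (E1 w), (E2 w). tauto.
  - apply P3.
  - intros [a [b [c [Hb [Hc [Nb Nc]]]]]].
    destruct (ss_case T op Hassoc Hab a b Hb) as [H1|H1]; [contradiction|].
    destruct (ss_case T op Hassoc Hab a c Hc) as [H2|H2]; [|contradiction].
    assert (Eaba : op (op a b) a = a) by (rewrite <- Hassoc, H1; apply Id).
    assert (Eaca : op a (op c a) = a) by (rewrite Hassoc, H2; apply Id).
    destruct (Hab (op a b) (op c a)) as [[H|H]|[H|H]].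
    + apply Nb.
      assert (K : op (op (op a b) (op c a)) a = op (op a b) (op c a))
        by (rewrite <- (Hassoc (op a b) (op c a) a), IdL; reflexivity).
      transitivity (op (op (op a b) (op c a)) a).
      * rewrite K; symmetry; exact H.
      * rewrite H; exact Eaba.
    + apply Nc.
      assert (K : op a (op (op a b) (op c a)) = op (op a b) (op c a))
        by (rewrite (Hassoc a (op a b) (op c a)), (Hassoc a a b), Id; reflexivity).
      transitivity (op a (op (op a b) (op c a))).
      * rewrite K; symmetry; exact H.
      * rewrite H; exact Eaca.
    + apply Nc.
      assert (K : op (op (op c a) (op a b)) a = op c a)
        by (rewrite <- (Hassoc (op c a) (op a b) a), Eaba, IdL; reflexivity).
      transitivity (op (op (op c a) (op a b)) a).
      * rewrite K; reflexivity.
      * rewrite H; exact Eaba.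
    + apply Nb.
      assert (K : op a (op (op c a) (op a b)) = op a b)
        by (rewrite (Hassoc a (op c a) (op a b)), Eaca, Hassoc, Id; reflexivity).
      transitivity (op a (op (op c a) (op a b))).
      * rewrite K; reflexivity.
      * rewrite H; exact Eaca.
  - intros x' Hs Nyx Hx'.
    assert (Hs' : ssubset (ideal2 op x') (ideal2 op y)).
    { destruct Hs as [Hs Hne]. split.
      - intros w Hw. apply Hs. apply Hx'. exact Hw.
      - intro He. apply Hne. intro w. rewrite (Hx' w). apply He. }
    destruct (ss_case T op Hassoc Hab x y Hs) as [Exy|Eyx]; [|contradiction].
    destruct (ss_case T op Hassoc Hab x' y Hs') as [E|E]; [exact E|].
    destruct (P3 x x' Hx') as [_ [[F|F] _]].
    + exfalso. apply Nyx. rewrite <- F at 1. rewrite Hassoc, E. exact F.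
    + rewrite <- F at 1. rewrite <- Hassoc, Exy. exact F.
Qed.
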